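(* Let $0<p<q$ be relatively prime integers and let $\mathcal{G}$ be the Markov snake graph of slope $p/q$. Then $\mathcal{G}$ has a rotational symmetry at its center tile. Moreover: (1) $\mathcal{G}$ has exactly $p$ horizontal segments, and there are positive integers $\nu_1,\dots,\nu_p$ with $|\nu_i-\nu_j|\le1$ for all $i\ne j$ such that the $i$-th horizontal segment has exactly $2(\nu_i-1)+3$ tiles; (2) $\mathcal{G}$ has exactly $p-1$ vertical segments, each of which has exactly $3$ tiles.
   Context: A tile is a unit square in the plane with sides parallel to the axes, viewed as a graph with 4 vertices and 4 edges. A snake graph with $d\ge1$ tiles is the union of tiles $G_1,\dots,G_d$ with each $G_{i+1}$ the translate of $G_i$ by $(0,1)$ or $(1,0)$, so that $G_i,G_{i+1}$ share exactly one edge $e_i$. A sign function on a snake graph is a map $f$ from edges to $\{+,-\}$ such that in each tile the north and west edges have the same sign, the south and east edges have the same sign, and north and south edges have opposite signs. For positive integers $a_1,\dots,a_n$ with $d=a_1+\dots+a_n-1\ge1$, $\mathcal{G}[a_1,\dots,a_n]$ is the unique snake graph with tiles $G_1,\dots,G_d$ admitting a sign function $f$ and an edge $e_d\in\{\text{north edge of }G_d,\text{east edge of }G_d\}$ such that, with $e_0$ the south edge of $G_1$, the sequence $(f(e_0),\dots,f(e_d))$ consists of $a_1$ copies of a sign $s$, then $a_2$ copies of $-s$, then $a_3$ copies of $s$, etc. For relatively prime integers $0<p<q$ put $v_i=\lfloor iq/p\rfloor-\lfloor (i-1)q/p\rfloor$ for $1\le i\le p-1$ and $v_p=q-1-\lfloor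 (p-1)q/p\rfloor$. The Markov snake graph of slope $p/q$ is $\mathcal{G}[c]$, where $c$ is the sequence $2,\,1^{2(v_1-1)},\,2,2,\,1^{2(v_2-1)},\,2,2,\dots,2,2,\,1^{2(v_p-1)},\,2$ ($1^k$ denotes $k$ consecutive entries equal to 1). A snake graph has a rotational symmetry at its center tile if some tile $G_i$ is such that rotation by $180^\circ$ about the center of $G_i$ maps the graph onto itself. A horizontal (resp. vertical) segment is a maximal run $G_j,G_{j+1},\dots,G_k$ of at least two consecutive tiles such that each $G_{l+1}$ ($j\le l<k$) is east (resp. north) of $G_l$; segments are ordered along the snake graph. *)

(* Defs.v *)
From mathcomp Require Import all_boot all_algebra.
Set Implicit Arguments. Unset Strict Implicit. Unset Printing Implicit Defensive.
Import GRing.Theory Num.Theory.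

(* A snake graph with d tiles G_1,...,G_d is encoded, up to
   translation, by its list of moves  dirs : seq bool  of size d-1:
   the (l+1)-th entry (0-based index l) is [true] if G_{l+2} is the translate
   of G_{l+1} by (0,1) (north) and [false] if by (1,0) (east).
   INTERNALLY TILES ARE INDEXED 0-BASED: tile i (0 <= i < d) is G_{i+1}.
   Tile i is the unit square with lower-left corner [pos dirs i]. *)

Inductive edge : Type :=
| Hedge of int & int   (* unit segment from (x,y) to (x+1,y) *)
| Vedge of int & int.  (* unit segment from (x,y) to (x,y+1) *)

Definition ntiles (dirs : seq bool) : nat := (size dirs).+1.

Definition pos (dirs : seq bool) (i : nat) : int * int :=
  (Posz (count negb (take i dirs)), Posz (count id (take i dirs))).

Definition south (c : int * int) : edge := Hedge c.1 c.2.
Definition north (c : int * int) : edge := Hedge c.1 (c.2 + 1)%R.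
Definition west  (c : int * int) : edge := Vedge c.1 c.2.
Definition east  (c : int * int) : edge := Vedge (c.1 + 1)%R c.2.

Definition in_graph (dirs : seq bool) (e : edge) : Prop :=
  exists2 i, i < ntiles dirs &
    let c := pos dirs i in
    e = south c \/ e = north c \/ e = west c \/ e = east c.

(* sign functions, with signs encoded as bool (true = +) *)
Definition is_sign_function (dirs : seq bool) (f : edge -> bool) : Prop :=
  forall i, i < ntiles dirs ->
    let c := pos dirs i in
    [/\ f (north c) = f (west c), f (south c) = f (east c)
      & f (north c) != f (south c)].

(* the distinguished edges e_0, ..., e_d  (lastN selects e_d:
   true = north edge of G_d, false = east edge of G_d) *)
Definition dist_edge (dirs : seq bool) (lastN : bool) (i : nat) : edge :=
  if i == 0 then south (pos dirs 0)
  else if i < ntiles dirs then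
    (if nth false dirs i.-1 then north (pos dirs i.-1) else east (pos dirs i.-1))
  else (if lastN then north (pos dirs i.-1) else east (pos dirs i.-1)).

Fixpoint alt_signs (s : bool) (a : seq nat) : seq bool :=
  if a is x :: r then nseq x s ++ alt_signs (~~ s) r else [::].

Definition is_snakeG (a : seq nat) (dirs : seq bool) : Prop :=
  let d := (sumn a).-1 in
  [/\ all (fun x => 0 < x) a, 1 <= d, ntiles dirs = d &
    exists (f : edge -> bool) (lastN : bool) (s : bool),
      is_sign_function dirs f /\
      [seq f (dist_edge dirs lastN i) | i <- iota 0 d.+1] = alt_signs s a].

Definition markov_v (p q i : nat) : nat :=
  if i < p then i * q %/ p - i.-1 * q %/ p
  else q - 1 - (p - 1) * q %/ p.

Definition markov_cf (p q : nat) : seq nat :=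
  2 :: flatten [seq nseq (2 * (markov_v p q i - 1)) 1 ++
                   (if i == p then [:: 2] else [:: 2; 2]) | i <- iota 1 p].

(* 180 degree rotation about the center (x0+1/2, y0+1/2) of the tile with
   lower-left corner (x0,y0); the point (x,y) goes to (2x0+1-x, 2y0+1-y). *)
Definition rot_edge (c : int * int) (e : edge) : edge :=
  match e with
  | Hedge x y => Hedge (2 * c.1 - x)%R (2 * c.2 + 1 - y)%R
  | Vedge x y => Vedge (2 * c.1 + 1 - x)%R (2 * c.2 - y)%R
  end.

Definition rot_symmetric_at_tile (dirs : seq bool) : Prop :=
  exists2 i, i < ntiles dirs &
    forall e, in_graph dirs e <-> in_graph dirs (rot_edge (pos dirs i) e).

(* Segments.  (j,k) with j < k < ntiles (0-based tiles) is a segment in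
   direction b (false = horizontal/east, true = vertical/north) if every move
   from tile l to l+1 (j <= l < k) is in direction b, and the run is maximal. *)
Definition is_segment (b : bool) (dirs : seq bool) (jk : nat * nat) : bool :=
  let: (j, k) := jk in
  [&& j < k, k < ntiles dirs,
      all (fun l => nth false dirs l == b) (index_iota j k),
      (j == 0) || (nth false dirs j.-1 != b) &
      (k == size dirs) || (nth false dirs k != b)].

Definition segments (b : bool) (dirs : seq bool) : seq (nat * nat) :=
  [seq jk <- [seq (j, k) | j <- iota 0 (ntiles dirs), k <- iota 0 (ntiles dirs)]
   | is_segment b dirs jk].

Definition hsegments := segments false.
Definition vsegments := segments true.

Definition seg_tiles (jk : nat * nat) : nat := jk.2 - jk.1 + 1.

(* Main.v *)
Require Import Defs.
From mathcomp Require Import all_boot all_algebra.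
From mathcomp Require Import zify.
Set Implicit Arguments. Unset Strict Implicit. Unset Printing Implicit Defensive.



Lemma pos_step dirs i : i < size dirs ->
  pos dirs i.+1 = if nth false dirs i then ((pos dirs i).1, ((pos dirs i).2 + 1)%R)
                  else (((pos dirs i).1 + 1)%R, (pos dirs i).2).
Proof.
move=> Hi; rewrite /pos (take_nth false Hi) -cats1 !count_cat /=.
by case: (nth false dirs i) => /=; congr pair; lia.
Qed.

Definition Dn dirs (lastN : bool) i := nth false (true :: rcons dirs lastN) i.

Lemma sign_inv dirs lastN f : is_sign_function dirs f ->
  forall i, i <= ntiles dirs ->
  f (dist_edge dirs lastN i) = f (dist_edge dirs lastN 0) (+) odd i (+) ~~ Dn dirs lastN i.
Proof.
move=> Hf; elim=> [|i IH] Hi; first by rewrite /Dn /=; case: (f _).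
have Hit : i < ntiles dirs by [].
have {}IH := IH (ltnW Hi).
have [Hnw Hse Hns] := Hf i Hit.
have Hentry : dist_edge dirs lastN i = if Dn dirs lastN i then south (pos dirs i) else west (pos dirs i).
  rewrite /dist_edge /Dn; case: i {IH Hi Hnw Hse Hns} Hit => [|i] Hit //=.
  rewrite Hit nth_rcons; have Hi' : i < size dirs by [].
  rewrite Hi' pos_step //.
  by case: (nth false dirs i).
have Hexit : dist_edge dirs lastN i.+1 = if Dn dirs lastN i.+1 then north (pos dirs i) else east (pos dirs i).
  rewrite /dist_edge /Dn /= nth_rcons.
  rewrite /ntiles in Hit *.
  case: ltnP => H1; case: ltnP => H2 //; try (exfalso; lia).
  have -> : i = size dirs by move: H1 H2; rewrite /ntiles; lia.
  by rewrite eqxx.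
rewrite Hexit; rewrite Hentry in IH.
move: IH Hns Hnw Hse; rewrite /=.
case: (Dn dirs lastN i); case: (Dn dirs lastN i.+1) => /=;
move: (f (north _)) (f (south _)) (f (west _)) (f (east _)) (f (dist_edge _ _ 0)) (odd i);
by do 6 case.
Qed.


Definition fglob (e : edge) : bool :=
  match e with Hedge x y => odd (absz x + absz y) | Vedge x y => ~~ odd (absz x + absz y) end.

Lemma fglob_sign dirs : is_sign_function dirs fglob.
Proof.
move=> i _; rewrite /pos /north /south /west /east /=.
rewrite addnA addn1 addnAC addn1 /=.
by split => //; case: (odd _).
Qed.

Lemma size_alt c s : size (alt_signs s c) = sumn c.
Proof. by elim: c s => [|x c IH] s //=; rewrite size_cat size_nseq IH. Qed.

Fixpoint Dg (b : bool) (c : seq nat) : seq bool :=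
  if c is x :: r then [seq b (+) odd i | i <- iota 0 x] ++ Dg (b (+) ~~ odd x) r else [::].

Lemma Dg_E c : forall s t,
  [seq ~~ (nth false (alt_signs s c) i (+) odd i (+) t) | i <- iota 0 (sumn c)] = Dg (~~ (s (+) t)) c.
Proof.
elim: c => [|x c IH] s t //=.
rewrite iotaD map_cat add0n; congr cat.
  apply/eq_in_map => i; rewrite mem_iota add0n => /andP [_ Hi].
  rewrite nth_cat size_nseq Hi nth_nseq Hi.
  by case: s; case: t; case: (odd i).
rewrite -[x in iota x _]addn0 iotaDl -map_comp.
have -> : ~~ (s (+) t) (+) ~~ odd x = ~~ (~~ s (+) (t (+) odd x)).
  by case: s; case: t; case: (odd x).
rewrite -IH.
apply: eq_map => j /=.
rewrite nth_cat size_nseq ltnNge leq_addr /= addKn oddD.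
by case: s; case: t; case: (odd x); case: (odd j); case: (nth _ _ _).
Qed.



Fixpoint mkr (b : bool) (rs : seq nat) : seq bool :=
  if rs is r :: rs' then nseq r b ++ mkr (~~ b) rs' else [::].
Fixpoint runs_aux (v : nat) (vs : seq nat) : seq nat :=
  if vs is u :: vs' then 2 * v :: 2 :: runs_aux u vs' else [:: 2 * v].
Fixpoint pcs_aux (v : nat) (vs : seq nat) : seq nat :=
  if vs is u :: vs' then nseq (2 * (v - 1)) 1 ++ [:: 2; 2] ++ pcs_aux u vs'
  else nseq (2 * (v - 1)) 1 ++ [:: 2].

Lemma Dg_ones b n X : Dg b (nseq n 1 ++ X) = nseq n b ++ Dg b X.
Proof. elim: n => //= n IH; rewrite addbF /= IH; done. Qed.

Lemma nseq_rcons n (x : bool) : nseq n x ++ [:: x] = x :: nseq n x.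
Proof. by elim: n => //= n ->. Qed.

Lemma aux1 n : false :: nseq n false ++ [:: false; true] = rcons (nseq n.+2 false) true.
Proof. by elim: n => //= n [] ->. Qed.

Lemma aux2 n X : false :: nseq n false ++ [:: false; true; true; false] ++ X
   = nseq n.+2 false ++ [:: true; true] ++ false :: X.
Proof. by elim: n => //= n [] ->. Qed.

Lemma Dg_pcs vs : forall v, 0 < v -> all (fun u => 0 < u) vs ->
  false :: Dg false (pcs_aux v vs) = rcons (mkr false (runs_aux v vs)) true.
Proof.
elim: vs => [|u vs IH] [|w] // _.
  have -> : pcs_aux w.+1 [::] = nseq (2 * w) 1 ++ [:: 2] by rewrite /= subn1.
  have -> : runs_aux w.+1 [::] = [:: (2 * w).+2] by rewrite /= mulnS.
  by rewrite Dg_ones /= cats0 => _; exact: aux1.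
move=> /andP [Hu Hall].
have -> : pcs_aux w.+1 (u :: vs) = nseq (2 * w) 1 ++ [:: 2; 2] ++ pcs_aux u vs.
  by rewrite /= subn1.
have -> : runs_aux w.+1 (u :: vs) = (2 * w).+2 :: 2 :: runs_aux u vs by rewrite /= mulnS.
rewrite Dg_ones.
have -> : Dg false ([:: 2; 2] ++ pcs_aux u vs) = [:: false; true; true; false] ++ Dg false (pcs_aux u vs) by [].
have -> : mkr false ((2 * w).+2 :: 2 :: runs_aux u vs) = nseq (2 * w).+2 false ++ [:: true; true] ++ mkr false (runs_aux u vs) by [].
by rewrite rcons_cat rcons_cat -(IH u Hu Hall) aux2.
Qed.

Lemma flat_cons (T : Type) (a : seq T) l : flatten (a :: l) = a ++ flatten l.
Proof. by []. Qed.

Lemma flatten_blocks (V : nat -> nat) P n : forall k, P = k + n ->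
  flatten [seq nseq (2 * (V i - 1)) 1 ++ (if i == P then [:: 2] else [:: 2; 2]) | i <- iota k n.+1]
  = pcs_aux (V k) [seq V i | i <- iota k.+1 n].
Proof.
elim: n => [|n IH] k HP.
  by rewrite /= HP addn0 eqxx cats0.
have -> : iota k n.+2 = k :: iota k.+1 n.+1 by [].
rewrite map_cons flat_cons IH; last by rewrite HP addnS.
have -> : (k == P) = false by apply/negbTE; rewrite HP; lia.
by rewrite -catA.
Qed.



Definition st (rs : seq nat) m := sumn (take m rs).

Lemma size_mkr b rs : size (mkr b rs) = sumn rs.
Proof. by elim: rs b => //= r rs IH b; rewrite size_cat size_nseq IH. Qed.

Lemma st0 rs : st rs 0 = 0. Proof. by case: rs. Qed.
Lemma st_cons r rs m : st (r :: rs) m.+1 = r + st rs m. Proof. by []. Qed.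

Lemma st_S rs m : m < size rs -> st rs m.+1 = st rs m + nth 0 rs m.
Proof. by move=> H; rewrite /st (take_nth 0 H) -cats1 sumn_cat /= addn0. Qed.

Lemma st_mono rs m m' : m <= m' -> st rs m <= st rs m'.
Proof.
by move=> H; rewrite /st -(subnKC H) takeD sumn_cat leq_addr.
Qed.

Lemma st_le rs m : st rs m <= sumn rs.
Proof. by rewrite /st -{2}(cat_take_drop m rs) sumn_cat leq_addr. Qed.

Lemma st_size rs m : size rs <= m -> st rs m = sumn rs.
Proof. by move=> H; rewrite /st take_oversize. Qed.

Lemma nth_mkr rs : forall b m l, m < size rs -> st rs m <= l < st rs m.+1 ->
  nth false (mkr b rs) l = b (+) odd m.
Proof.
elim: rs => [|r rs IH] b [|m] l //= Hm.
  rewrite /st /= => Hl.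
  have Hl' : l < r by move: Hl; rewrite take0 /= addn0.
  by rewrite nth_cat size_nseq Hl' nth_nseq Hl'; case: b.
rewrite !st_cons => /andP [H1 H2].
rewrite nth_cat size_nseq ltnNge (leq_trans (leq_addr _ _) H1) /=.
rewrite (IH _ m) //; first by case: b; case: (odd m).
apply/andP; split; lia.
Qed.

Lemma locate rs l : l < sumn rs -> exists2 m, m < size rs & st rs m <= l < st rs m.+1.
Proof.
elim: rs l => [|r rs IH] l //= Hl.
case: (ltnP l r) => Hlr.
  by exists 0 => //; rewrite /st /= take0 /= addn0.
have [m Hm Hm2] := IH (l - r) ltac:(lia).
exists m.+1 => //; rewrite !st_cons; lia.
Qed.

Lemma st_strict rs m m' : all (fun x => 0 < x) rs -> m < m' -> m < size rs -> st rs m < st rs m'.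
Proof.
move=> Hp Hmm' Hm.
have Hr : 0 < nth 0 rs m by apply: (allP Hp); exact: mem_nth.
have := st_mono rs Hmm'; rewrite st_S //; lia.
Qed.

Lemma is_seg_iff b b0 rs j k : all (fun x => 0 < x) rs ->
  is_segment b (mkr b0 rs) (j, k) =
  has (fun m => (b0 (+) odd m == b) && (j == st rs m) && (k == st rs m.+1)) (iota 0 (size rs)).
Proof.
move=> Hp; rewrite /is_segment /ntiles size_mkr.
apply/idP/idP.
- case/and5P => Hjk Hk Hall Hj Hk2.
  have Hnth : forall l, j <= l < k -> nth false (mkr b0 rs) l = b.
    by move=> l Hl; apply/eqP; apply: (allP Hall); rewrite mem_index_iota.
  have [m Hm Hjm] := locate (l := j) (rs := rs) ltac:(lia).
  have Hb : b0 (+) odd m = b by rewrite -(nth_mkr b0 Hm Hjm); apply: Hnth; lia.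
  apply/hasP; exists m; first by rewrite mem_iota.
  rewrite Hb eqxx /=.
  have Ej : j = st rs m.
    case: (ltnP (st rs m) j) => H; last by lia.
    move: Hj; have -> : (j == 0) = false by apply/negbTE; lia.
    rewrite /= (nth_mkr b0 Hm (l := j.-1)); last by lia.
    by rewrite Hb eqxx.
  rewrite Ej eqxx /=.
  case: (ltngtP k (st rs m.+1)) => H //.
  + move: Hk2; have -> : (k == sumn rs) = false.
      by apply/negbTE; have := st_le rs m.+1; lia.
    by rewrite /= (nth_mkr b0 Hm (l := k)) ?Hb ?eqxx //; lia.
  + have Hm1 : m.+1 < size rs.
      case: (ltnP m.+1 (size rs)) => // H'.
      by move: H; rewrite st_size //; lia.
    have := Hnth (st rs m.+1) ltac:(lia).
    have Hr : 0 < nth 0 rs m.+1 by apply: (allP Hp); exact: mem_nth.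
    rewrite (nth_mkr b0 Hm1 (l := st rs m.+1)); last by rewrite (st_S Hm1); lia.
    by rewrite /= -Hb; case: (b0); case: (odd m).
- case/hasP => m; rewrite mem_iota add0n => Hm /andP [/andP [/eqP Hb /eqP Ej] /eqP Ek].
  have Hr : 0 < nth 0 rs m by apply: (allP Hp); exact: mem_nth.
  have Hst := st_S Hm.
  apply/and5P; split.
  + lia.
  + by have := st_le rs m.+1; lia.
  + apply/allP => l; rewrite mem_index_iota => Hl.
    by rewrite (nth_mkr b0 Hm (l := l)) ?Hb //; lia.
  + case: m Hm Ej Ek Hb Hst Hr => [|m] Hm Ej Ek Hb Hst Hr; first by rewrite Ej st0.
    have Hm' : m < size rs by lia.
    have Hr' : 0 < nth 0 rs m by apply: (allP Hp); exact: mem_nth.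
    rewrite (nth_mkr b0 Hm' (l := j.-1)); last by rewrite Ej (st_S Hm'); lia.
    by rewrite orbC /= -Hb ?addbN; case: (b0 (+) odd m).
  + case: (ltnP m.+1 (size rs)) => Hm1.
    * have Hr' : 0 < nth 0 rs m.+1 by apply: (allP Hp); exact: mem_nth.
      rewrite (nth_mkr b0 Hm1 (l := k)); last by rewrite Ek (st_S Hm1); lia.
      by rewrite orbC /= -Hb ?addbN; case: (b0 (+) odd m).
    * by rewrite Ek st_size // eqxx.
Qed.


Definition segR b b0 rs := [seq (st rs m, st rs m.+1) | m <- [seq m <- iota 0 (size rs) | b0 (+) odd m == b]].

Lemma segs_mem b b0 rs : all (fun x => 0 < x) rs ->
  segments b (mkr b0 rs) =i segR b b0 rs.
Proof.
move=> Hp [j k]; rewrite /segments mem_filter.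
have -> : is_segment b (mkr b0 rs) (j, k) = has (fun m => (b0 (+) odd m == b) && (j == st rs m) && (k == st rs m.+1)) (iota 0 (size rs)) by apply: is_seg_iff.
apply/idP/idP.
- case/andP => /hasP [m Hm /andP [/andP [Hb /eqP Ej] /eqP Ek]] _.
  by apply/mapP; exists m; [rewrite mem_filter Hb | rewrite Ej Ek].
- case/mapP => m; rewrite mem_filter => /andP [Hb Hm] [Ej Ek].
  have Hh : has (fun m => (b0 (+) odd m == b) && (j == st rs m) && (k == st rs m.+1)) (iota 0 (size rs)).
    by apply/hasP; exists m => //; rewrite Hb Ej Ek !eqxx.
  rewrite Hh andTb.
  have := is_seg_iff b b0 j k Hp; rewrite Hh /is_segment => /and5P [H1 H2 _ _ _].
  move: H2; rewrite /ntiles size_mkr => H2.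
  apply/allpairsPdep; exists j, k; split => //; rewrite mem_iota /ntiles ?size_mkr; lia.
Qed.

Lemma segs_uniq b dirs : uniq (segments b dirs).
Proof.
apply: filter_uniq; apply: allpairs_uniq; try exact: iota_uniq.
by move=> [a1 a2] [c1 c2] _ _ /=.
Qed.

Lemma segR_uniq b b0 rs : all (fun x => 0 < x) rs -> uniq (segR b b0 rs).
Proof.
move=> Hp; rewrite /segR map_inj_in_uniq ?filter_uniq ?iota_uniq //.
move=> m m'; rewrite !mem_filter !mem_iota !add0n => /andP [_ Hm] /andP [_ Hm'] [E _].
case: (ltngtP m m') => // H.
- by have := st_strict Hp H Hm; rewrite E ltnn.
- by have := st_strict Hp H Hm'; rewrite E ltnn.
Qed.

Lemma segs_size b b0 rs : all (fun x => 0 < x) rs ->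
  size (segments b (mkr b0 rs)) = count (fun m => b0 (+) odd m == b) (iota 0 (size rs)).
Proof.
move=> Hp; rewrite -size_filter.
have := uniq_perm (segs_uniq b (mkr b0 rs)) (segR_uniq b b0 Hp) (segs_mem b b0 Hp).
by move/perm_size => ->; rewrite size_map.
Qed.


Lemma floor_add p a b : 0 < p -> a %/ p + b %/ p <= (a + b) %/ p <= a %/ p + b %/ p + 1.
Proof.
move=> Hp.
have E1 := divn_eq a p; have R1 := ltn_pmod a Hp.
have E2 := divn_eq b p; have R2 := ltn_pmod b Hp.
have E3 := divn_eq (a + b) p; have R3 := ltn_pmod (a + b) Hp.
move: E1 R1 E2 R2 E3 R3.
move: (a %/ p) (a %% p) (b %/ p) (b %% p) ((a + b) %/ p) ((a + b) %% p) => A r1 B r2 C r3.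
move=> E1 R1 E2 R2 E3 R3.
apply/andP; split; nia.
Qed.

Lemma not_dvd p q j : coprime p q -> 0 < j < p -> 0 < (j * q) %% p.
Proof.
move=> Hc /andP [Hj Hjp]; rewrite lt0n; apply/negP => /eqP H.
have : p %| j * q by rewrite /dvdn H.
rewrite Gauss_dvdl // => /dvdn_leq; lia.
Qed.

Lemma floor_compl p q j : coprime p q -> 0 < j < p ->
  j * q %/ p + (p - j) * q %/ p + 1 = q.
Proof.
move=> Hc Hj.
have Hp : 0 < p by lia.
have Hr := not_dvd Hc Hj.
have E1 := divn_eq (j * q) p; have R1 := ltn_pmod (j * q) Hp.
have E2 := divn_eq ((p - j) * q) p; have R2 := ltn_pmod ((p - j) * q) Hp.
have Es : j * q + (p - j) * q = p * q by rewrite -mulnDl; congr (_ * _); lia.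
move: E1 R1 E2 R2 Hr Es.
move: (j * q %/ p) (j * q %% p) ((p - j) * q %/ p) ((p - j) * q %% p) (j * q) ((p - j) * q) => A r1 B r2 X Y.
move=> E1 R1 E2 R2 Hr Es.
nia.
Qed.

Lemma qdiv_eq p q : 1 < p -> coprime p q -> (q - 1) %/ p = q %/ p.
Proof.
move=> Hp Hc.
have Hp0 : 0 < p by lia.
have Hr : 0 < q %% p by have := not_dvd Hc (j := 1); rewrite mul1n; apply; lia.
have E1 := divn_eq q p; have R1 := ltn_pmod q Hp0.
have E2 := divn_eq (q - 1) p; have R2 := ltn_pmod (q - 1) Hp0.
move: E1 R1 E2 R2 Hr.
move: (q %/ p) (q %% p) ((q - 1) %/ p) ((q - 1) %% p) => A r1 B r2.
move=> E1 R1 E2 R2 Hr; nia.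
Qed.

Lemma L_pos p q : 0 < p < q -> 0 < (q - 1) %/ p.
Proof.
move=> /andP [Hp Hpq].
have E2 := divn_eq (q - 1) p; have R2 := ltn_pmod (q - 1) Hp.
move: E2 R2; move: ((q - 1) %/ p) ((q - 1) %% p) => B r2 E2 R2; nia.
Qed.

Lemma V_last p q : 1 < p -> coprime p q -> markov_v p q p = q %/ p.
Proof.
move=> Hp Hc; rewrite /markov_v ltnn.
have := floor_compl Hc (j := 1); rewrite mul1n => H.
have {}H := H ltac:(lia); move: H.
by move: (q %/ p) ((p - 1) * q %/ p) => a b; lia.
Qed.

Lemma V_lt p q i : 0 < i < p -> markov_v p q i = i * q %/ p - i.-1 * q %/ p.
Proof. by move=> /andP [_ H]; rewrite /markov_v H. Qed.

Lemma V_bounds p q i : 0 < p < q -> coprime p q -> 0 < i <= p ->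
  (q - 1) %/ p <= markov_v p q i <= (q - 1) %/ p + 1.
Proof.
move=> /andP [Hp Hpq] Hc /andP [Hi Hip].
case: (ltngtP p 1) => Hp1; first lia.
- rewrite qdiv_eq //.
  case: (ltngtP i p) => Hi2; last 2 first.
  + lia.
  + by rewrite Hi2 V_last // leqnn leq_addr.
  rewrite V_lt; last by lia.
  have := floor_add (i.-1 * q) q Hp.
  have -> : i.-1 * q + q = i * q by rewrite -mulSnr; congr (_ * _); lia.
  lia.
- subst p; have -> : i = 1 by lia.
  rewrite /markov_v ltnn !divn1; lia.
Qed.

Lemma V_pal p q i : 0 < p -> coprime p q -> 0 < i <= p ->
  markov_v p q i = markov_v p q (p + 1 - i).
Proof.
move=> Hp Hc /andP [Hi Hip].
case: (ltngtP p 1) => Hp1; first lia; last first.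
  by subst p; have -> : i = 1 by lia.
case: (ltngtP i 1) => Hi1; first lia; last first.
  subst i; rewrite addnK V_last // V_lt; last by lia.
  by rewrite mul1n mul0n div0n subn0.
case: (ltngtP i p) => Hi2; last first.
  subst i; rewrite (_ : p + 1 - p = 1); last by lia.
  rewrite V_last // V_lt; last by lia.
  by rewrite mul1n mul0n div0n subn0.
  lia.
rewrite !V_lt; try lia.
have H1 := floor_compl Hc (j := i.-1) ltac:(lia).
have H2 := floor_compl Hc (j := i) ltac:(lia).
have -> : (p + 1 - i).-1 = p - i by lia.
have -> : p + 1 - i = p - i.-1 by lia.
lia.
Qed.


Lemma size_runs vs : forall v, size (runs_aux v vs) = 2 * size vs + 1.
Proof. elim: vs => [|u vs IH] v //=; rewrite IH; lia. Qed.

Lemma nth_runs_even vs : forall v k, k <= size vs ->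
  nth 0 (runs_aux v vs) (2 * k) = 2 * nth 0 (v :: vs) k.
Proof.
elim: vs => [|u vs IH] v [|k] // Hk.
by rewrite mulnS add2n; apply: IH.
Qed.

Lemma nth_runs_odd vs : forall v k, k < size vs ->
  nth 0 (runs_aux v vs) (2 * k).+1 = 2.
Proof.
elim: vs => [|u vs IH] v [|k] // Hk.
by rewrite mulnS add2n; apply: IH.
Qed.

Lemma runs_pos vs : forall v, 0 < v -> all (fun x => 0 < x) vs -> all (fun x => 0 < x) (runs_aux v vs).
Proof.
elim: vs => [|u vs IH] v Hv //=; first by rewrite muln_gt0 Hv.
by case/andP => Hu Ha; rewrite muln_gt0 Hv /= IH.
Qed.

Lemma mkr_cat b s1 s2 : mkr b (s1 ++ s2) = mkr b s1 ++ mkr (b (+) odd (size s1)) s2.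
Proof.
elim: s1 b => [|r s1 IH] b /=; first by rewrite addbF.
by rewrite IH -catA; congr (_ ++ (_ ++ _)); case: b; case: (odd _).
Qed.


Lemma rev_mkr rs : forall b, rev (mkr b rs) = mkr (b (+) ~~ odd (size rs)) (rev rs).
Proof.
elim: rs => [|r rs IH] b //=.
rewrite rev_cat IH rev_cons -cats1 mkr_cat size_rev /= cats0 rev_nseq.
congr (_ ++ nseq _ _); first by case: b; case: (odd _).
by case: b; case: (odd _).
Qed.

Lemma runs_pal v vs : rev (v :: vs) = v :: vs -> rev (runs_aux v vs) = runs_aux v vs.
Proof.
move=> Hpal.
have Hs := size_runs vs v.
apply: (@eq_from_nth _ 0); first by rewrite size_rev.
move=> m; rewrite size_rev Hs => Hm.
rewrite nth_rev Hs //.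
have Hsz : size (v :: vs) = (size vs).+1 by [].
have Hnth : forall k, k <= size vs -> nth 0 (v :: vs) k = nth 0 (v :: vs) (size vs - k).
  move=> k Hk; rewrite -{1}Hpal nth_rev /=; last by lia.
  by congr nth; lia.
case: (boolP (odd m)) => Ho.
- have -> : m = (2 * m./2).+1 by have := odd_double_half m; rewrite Ho; lia.
  have -> : 2 * size vs + 1 - (2 * m./2).+2 = (2 * (size vs - m./2 - 1)).+1.
    have := odd_double_half m; rewrite Ho; lia.
  rewrite !nth_runs_odd //; have := odd_double_half m; rewrite Ho; lia.
- have -> : m = 2 * m./2 by have := odd_double_half m; rewrite (negbTE Ho); lia.
  have -> : 2 * size vs + 1 - (2 * m./2).+1 = 2 * (size vs - m./2).
    have := odd_double_half m; rewrite (negbTE Ho); lia.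
  have Hk : m./2 <= size vs by have := odd_double_half m; rewrite (negbTE Ho); lia.
  rewrite !nth_runs_even //; last by lia.
  rewrite (Hnth (m./2)) //; congr (_ * nth _ _ _); lia.
Qed.

Lemma count_odd n : count odd (iota 0 (2 * n + 1)) = n.
Proof.
elim: n => // n IH.
have -> : 2 * n.+1 + 1 = (2 * n + 1) + 2 by lia.
rewrite iotaD count_cat IH /= add0n.
have -> : odd (2 * n + 1) = true by rewrite oddD oddM.
by rewrite addn1.

Qed.

Lemma count_even n : count (fun m => ~~ odd m) (iota 0 (2 * n + 1)) = n.+1.
Proof.
have := count_predC odd (iota 0 (2 * n + 1)); rewrite count_odd size_iota.
rewrite (eq_count (a2 := fun m => ~~ odd m)) //; lia.
Qed.


Lemma rot_inv c e : rot_edge c (rot_edge c e) = e.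
Proof. by case: e => x y /=; [congr Hedge | congr Vedge]; lia. Qed.

Lemma pal_count (dirs : seq bool) (P : pred bool) i : rev dirs = dirs -> ~~ odd (size dirs) ->
  i <= size dirs ->
  count P (take (size dirs - i) dirs) + count P (take i dirs) = 2 * count P (take (size dirs)./2 dirs).
Proof.
move=> Hr Ho Hi.
set n := size dirs.
have Hn : n = 2 * n./2 by have := odd_double_half n; rewrite (negbTE Ho); lia.
have E1 : take (n - i) dirs = rev (drop i dirs).
  have -> : take (n - i) dirs = take (n - i) (rev dirs) by rewrite Hr.
  rewrite take_rev; congr (rev (drop _ _)); rewrite /n; lia.
have E2 : count P dirs = 2 * count P (take n./2 dirs).
  have E3 : take n./2 dirs = rev (drop n./2 dirs).
    have -> : take n./2 dirs = take n./2 (rev dirs) by rewrite Hr.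
    rewrite take_rev; congr (rev (drop _ _)); rewrite -/n; lia.
  rewrite -{1}(cat_take_drop n./2 dirs) count_cat E3 count_rev; lia.
rewrite E1 count_rev -E2 -{3}(cat_take_drop i dirs) count_cat; lia.
Qed.

Lemma pal_sym dirs : rev dirs = dirs -> ~~ odd (size dirs) -> rot_symmetric_at_tile dirs.
Proof.
move=> Hr Ho.
set n := size dirs; set h := n./2.
have Hn : n = 2 * h by have := odd_double_half n; rewrite (negbTE Ho) /h; lia.
have Hpos : forall i, i <= n -> pos dirs (n - i) =
   ((2 * (pos dirs h).1 - (pos dirs i).1)%R, (2 * (pos dirs h).2 - (pos dirs i).2)%R).
  move=> i Hi; rewrite /pos /=.
  have A := pal_count negb Hr Ho Hi; have B := pal_count id Hr Ho Hi.
  rewrite -/n -/h in A B.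
  congr pair; lia.
have Fwd : forall e, in_graph dirs e -> in_graph dirs (rot_edge (pos dirs h) e).
  move=> e [i Hi He]; exists (n - i); first by rewrite /ntiles -/n; lia.
  have Hi' : i <= n by move: Hi; rewrite /ntiles -/n; lia.
  rewrite Hpos //.
  move: He; rewrite /south /north /west /east.
  move: (pos dirs i) (pos dirs h) => [a b] [x y] /=.
  case=> [->|[->|[->|->]]] /=.
  - by right; left; congr Hedge; lia.
  - by left; congr Hedge; lia.
  - by right; right; right; congr Vedge; lia.
  - by right; right; left; congr Vedge; lia.
exists h; first by rewrite /ntiles -/n; lia.
move=> e; split; first exact: Fwd.
by move=> H; rewrite -(rot_inv (pos dirs h) e); apply: Fwd.
Qed.


Definition vs0 p q := [seq markov_v p q i | i <- iota 2 (p - 1)].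
Definition rs0 p q := runs_aux (markov_v p q 1) (vs0 p q).
Definition dirs0 p q := mkr false (rs0 p q).

Lemma cf_eq p q : 0 < p -> markov_cf p q = 2 :: pcs_aux (markov_v p q 1) (vs0 p q).
Proof.
move=> Hp; rewrite /markov_cf; congr cons.
have -> : iota 1 p = iota 1 (p - 1).+1 by rewrite subn1 prednK.
apply: flatten_blocks; lia.
Qed.

Lemma vs_full p q : 0 < p -> markov_v p q 1 :: vs0 p q = [seq markov_v p q i | i <- iota 1 p].
Proof. by rewrite /vs0 subn1; case: p. Qed.

Lemma mem_vs p q v : 0 < p -> v \in markov_v p q 1 :: vs0 p q -> exists2 i, 0 < i <= p & v = markov_v p q i.
Proof.
move=> Hp; rewrite vs_full // => /mapP [i]; rewrite mem_iota => Hi ->.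
exists i => //; lia.
Qed.

Lemma vs_bounds p q v : 0 < p < q -> coprime p q -> v \in markov_v p q 1 :: vs0 p q ->
  (q - 1) %/ p <= v <= (q - 1) %/ p + 1.
Proof.
move=> Hpq Hc Hv; have Hp : 0 < p by lia.
have [i Hi ->] := mem_vs Hp Hv; exact: V_bounds.
Qed.

Lemma vs_pos p q : 0 < p < q -> coprime p q -> 0 < markov_v p q 1 /\ all (fun x => 0 < x) (vs0 p q).
Proof.
move=> Hpq Hc; have HL := L_pos Hpq.
split.
  have := vs_bounds Hpq Hc (v := markov_v p q 1); rewrite inE eqxx => /(_ isT); lia.
apply/allP => v Hv.
have := vs_bounds Hpq Hc (v := v); rewrite inE Hv orbT => /(_ isT); lia.
Qed.

Lemma vs_pal p q : 0 < p -> coprime p q -> rev (markov_v p q 1 :: vs0 p q) = markov_v p q 1 :: vs0 p q.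
Proof.
move=> Hp Hc; rewrite vs_full //.
apply: (@eq_from_nth _ 0); first by rewrite size_rev.
move=> k; rewrite size_rev size_map size_iota => Hk.
rewrite nth_rev ?size_map ?size_iota // !(nth_map 0) ?size_iota //; try lia.
rewrite !nth_iota; try lia.
rewrite (V_pal Hp Hc (i := 1 + k)); last by lia.
congr markov_v; lia.
Qed.

Lemma Dseq_eq p q : 0 < p < q -> coprime p q ->
  [seq ~~ (nth false (alt_signs false (markov_cf p q)) i (+) odd i) | i <- iota 0 (sumn (markov_cf p q))]
  = true :: rcons (dirs0 p q) true.
Proof.
move=> Hpq Hc; have Hp : 0 < p by lia.
have := Dg_E (markov_cf p q) false false.
under eq_map => i do rewrite addbF.
move=> ->; rewrite cf_eq //.
have -> : Dg (~~ (false (+) false)) (2 :: pcs_aux (markov_v p q 1) (vs0 p q)) =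
  true :: false :: Dg false (pcs_aux (markov_v p q 1) (vs0 p q)) by [].
have [H1 H2] := vs_pos Hpq Hc.
by rewrite Dg_pcs.
Qed.

Lemma alt_xor c : forall s t, alt_signs (s (+) t) c = map (addb s) (alt_signs t c).
Proof.
elim: c => [|x c IH] s t //=.
by rewrite map_cat map_nseq -IH; congr (_ ++ alt_signs _ _); case: s; case: t.
Qed.

Lemma pcs_pos v vs : all (fun x => 0 < x) (pcs_aux v vs).
Proof.
elim: vs v => [|u vs IH] v; by rewrite /= all_cat all_nseq /= ?IH orbT.
Qed.

Lemma cf_pos p q : 0 < p -> all (fun x => 0 < x) (markov_cf p q).
Proof. by move=> Hp; rewrite cf_eq //= pcs_pos. Qed.

Lemma sumn_cf p q : 0 < p < q -> coprime p q -> sumn (markov_cf p q) = (size (dirs0 p q)).+2.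
Proof.
move=> Hpq Hc; have := congr1 size (Dseq_eq Hpq Hc).
by rewrite size_map size_iota /= size_rcons.
Qed.

Lemma dirs0_snake p q : 0 < p < q -> coprime p q -> is_snakeG (markov_cf p q) (dirs0 p q).
Proof.
move=> Hpq Hc; have Hp : 0 < p by lia.
have Hs := sumn_cf Hpq Hc.
have Hd : (sumn (markov_cf p q)).-1 = (size (dirs0 p q)).+1 by rewrite Hs.
rewrite /is_snakeG; cbv zeta; rewrite Hd; split => //; first exact: cf_pos.
exists fglob, true, false; split; first exact: fglob_sign.
rewrite -[RHS](mkseq_nth false) size_alt Hs /mkseq.
apply/eq_in_map => i; rewrite mem_iota add0n => Hi.
rewrite (sign_inv true (@fglob_sign (dirs0 p q)) (i := i)); last by rewrite /ntiles; lia.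
have -> : Dn (dirs0 p q) true i = nth false (true :: rcons (dirs0 p q) true) i by [].
have Hi' : i < sumn (markov_cf p q) by rewrite Hs; lia.
rewrite -(Dseq_eq Hpq Hc) (nth_map 0) ?size_iota ?nth_iota ?add0n //.
have -> : fglob (dist_edge (dirs0 p q) true 0) = false by rewrite /dist_edge /= /pos take0.
by case: (nth _ _ _); case: (odd i).
Qed.

Lemma dirs_unique p q dirs : 0 < p < q -> coprime p q -> is_snakeG (markov_cf p q) dirs ->
  dirs = dirs0 p q.
Proof.
move=> Hpq Hc; have Hp : 0 < p by lia.
have Hs := sumn_cf Hpq Hc.
have Hd : (sumn (markov_cf p q)).-1 = (size (dirs0 p q)).+1 by rewrite Hs.
rewrite /is_snakeG; cbv zeta; rewrite Hd => [[_ _ Hnt [f [lastN [s [Hf Hmap]]]]]].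
move: Hnt; rewrite /ntiles => /eqP; rewrite eqSS => /eqP Hsz.
have Hf' : forall i, i <= (size (dirs0 p q)).+1 ->
    f (dist_edge dirs lastN i) = nth false (alt_signs s (markov_cf p q)) i.
  move=> i Hi; rewrite -Hmap (nth_map 0) ?size_iota ?nth_iota //.
have Hs0 : f (dist_edge dirs lastN 0) = s by rewrite Hf' // cf_eq.
have HD : forall i, i < (size (dirs0 p q)).+2 ->
    Dn dirs lastN i = ~~ (nth false (alt_signs false (markov_cf p q)) i (+) odd i).
  move=> i Hi.
  have := sign_inv lastN Hf (i := i); rewrite /ntiles Hsz => /(_ Hi).
  rewrite Hf' // Hs0 -[s]addbF alt_xor (nth_map false); last by rewrite size_alt Hs.
  by rewrite addbF; move: (s) (nth _ _ _) (odd i) (Dn _ _ _) => [] [] [] [].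
have : true :: rcons dirs lastN = true :: rcons (dirs0 p q) true.
  apply: (@eq_from_nth _ false); first by rewrite /= !size_rcons Hsz.
  move=> i; rewrite /= size_rcons Hsz => Hi.
  rewrite -(Dseq_eq Hpq Hc) (nth_map 0) ?size_iota ?nth_iota ?Hs //.
  exact: HD.
by case=> /rcons_inj [].
Qed.

Lemma sumn_runs vs : forall v, sumn (runs_aux v vs) = 2 * (v + sumn vs + size vs).
Proof. elim: vs => [|u vs IH] v /=; rewrite ?IH; lia. Qed.

Lemma size_vs0 p q : size (vs0 p q) = p - 1.
Proof. by rewrite size_map size_iota. Qed.

Lemma rs0_pos p q : 0 < p < q -> coprime p q -> all (fun x => 0 < x) (rs0 p q).
Proof. by move=> Hpq Hc; have [H1 H2] := vs_pos Hpq Hc; apply: runs_pos. Qed.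

Lemma dirs0_sym p q : 0 < p < q -> coprime p q -> rot_symmetric_at_tile (dirs0 p q).
Proof.
move=> Hpq Hc; have Hp : 0 < p by lia.
apply: pal_sym.
  rewrite /dirs0 rev_mkr /rs0 size_runs runs_pal; last exact: vs_pal.
  by rewrite addn1 /= oddM.
by rewrite /dirs0 size_mkr /rs0 sumn_runs oddM.
Qed.

Lemma hsize p q : 0 < p < q -> coprime p q -> size (hsegments (dirs0 p q)) = p.
Proof.
move=> Hpq Hc; rewrite /hsegments /dirs0 segs_size; last exact: rs0_pos.
rewrite (eq_count (a2 := fun m => ~~ odd m)); last by move=> m /=; case: (odd m).
rewrite /rs0 size_runs count_even size_vs0; lia.
Qed.

Lemma vsize p q : 0 < p < q -> coprime p q -> size (vsegments (dirs0 p q)) = p - 1.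
Proof.
move=> Hpq Hc; rewrite /vsegments /dirs0 segs_size; last exact: rs0_pos.
rewrite (eq_count (a2 := odd)); last by move=> m /=; case: (odd m).
by rewrite /rs0 size_runs count_odd size_vs0.
Qed.

Lemma vtiles p q jk : 0 < p < q -> coprime p q -> jk \in vsegments (dirs0 p q) -> seg_tiles jk = 3.
Proof.
move=> Hpq Hc; rewrite /vsegments /dirs0 segs_mem; last exact: rs0_pos.
case/mapP => m; rewrite mem_filter mem_iota add0n => /andP [Ho Hm] ->.
rewrite /seg_tiles /= st_S //.
have Hk : m = (2 * m./2).+1 by have := odd_double_half m; move: Ho => /= /eqP ->; lia.
rewrite Hk nth_runs_odd; first lia.
move: Hm; rewrite /rs0 size_runs Hk; lia.
Qed.

Lemma htiles p q jk : 0 < p < q -> coprime p q -> jk \in hsegments (dirs0 p q) ->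
  exists2 w, (q - 1) %/ p <= w <= (q - 1) %/ p + 1 & seg_tiles jk = 2 * w + 1.
Proof.
move=> Hpq Hc; rewrite /hsegments /dirs0 segs_mem; last exact: rs0_pos.
case/mapP => m; rewrite mem_filter mem_iota add0n => /andP [Ho Hm] ->.
rewrite /seg_tiles /= st_S //.
have Ho' : ~~ odd m by move: Ho; case: (odd m).
have Hk : m = 2 * m./2 by have := odd_double_half m; rewrite (negbTE Ho'); lia.
have Hk2 : m./2 <= size (vs0 p q) by move: Hm; rewrite /rs0 size_runs; lia.
exists (nth 0 (markov_v p q 1 :: vs0 p q) m./2).
  apply: vs_bounds => //; apply: mem_nth => /=; lia.
have -> : nth 0 (rs0 p q) m = 2 * nth 0 (markov_v p q 1 :: vs0 p q) m./2.
  by rewrite {1}Hk /rs0 nth_runs_even.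
lia.
Qed.

Unset Implicit Arguments.

Theorem corollary4p2 (p q : nat) :
  0 < p -> p < q -> coprime p q ->
  (exists dirs, is_snakeG (markov_cf p q) dirs) /\
  forall dirs, is_snakeG (markov_cf p q) dirs ->
    [/\ rot_symmetric_at_tile dirs,
        size (hsegments dirs) = p /\
        (exists nu : nat -> nat,
            [/\ forall i, i < p -> 0 < nu i,
                forall i j, i < p -> j < p -> i != j ->
                  (nu i <= nu j + 1) && (nu j <= nu i + 1)
              & forall i, i < p ->
                  seg_tiles (nth (0, 0) (hsegments dirs) i) = 2 * (nu i - 1) + 3])
      & size (vsegments dirs) = p - 1 /\
        (forall jk, jk \in vsegments dirs -> seg_tiles jk = 3)].
Proof.
move=> Hp Hpq0 Hc.
have Hpq : 0 < p < q by rewrite Hp Hpq0.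
split; first by exists (dirs0 p q); apply: dirs0_snake.
move=> dirs Hd; rewrite (dirs_unique Hpq Hc Hd).
have HL := L_pos Hpq.
have Hw : forall i, i < p -> exists2 w, (q - 1) %/ p <= w <= (q - 1) %/ p + 1 &
    seg_tiles (nth (0, 0) (hsegments (dirs0 p q)) i) = 2 * w + 1.
  move=> i Hi; apply: htiles => //; apply: mem_nth; rewrite hsize //.
split.
- exact: dirs0_sym.
- split; first exact: hsize.
  exists (fun i => (seg_tiles (nth (0, 0) (hsegments (dirs0 p q)) i) - 1) %/ 2).
  split.
  + by move=> i Hi; have [w Hw1 ->] := Hw i Hi; lia.
  + move=> i j Hi Hj _.
    have [w Hw1 ->] := Hw i Hi; have [w' Hw1' ->] := Hw j Hj; apply/andP; split; lia.
  + by move=> i Hi; have [w Hw1 ->] := Hw i Hi; lia.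
- split; first exact: vsize.
  by move=> jk; apply: vtiles.
Qed.
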